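(* Let $k$ be a field containing all $m$-th roots of unity, with $p\nmid m$ if $\operatorname{char}(k)=p>0$. Let $\mathcal A$ be a perfect $k$-algebra, $S$ a commutative associative unital $k$-algebra, $\sigma_1\in\operatorname{Aut}(\mathcal A)$, $\sigma_2\in\operatorname{Aut}(S)$ with $\sigma_1^m=\mathrm{id}$, $\sigma_2^m=\mathrm{id}$, and suppose $S_{\bar 1}$ contains an invertible element $u$ of $S$. Let $d\in\mathcal D((\mathcal A\otimes S)_{\bar 0})$, $i,j,s,t\in\mathbb Z$, $a_{\bar i}\in\mathcal A_{\bar i}$, $a_{\bar j}\in\mathcal A_{\bar j}$, $b_{-\bar i+\bar s}\in S_{-\bar i+\bar s}$, $b_{-\bar j+\bar t}\in S_{-\bar j+\bar t}$. Then $$\big[u^{-m+s}d(a_{\bar i}\otimes u^{-s+m}b_{-\bar i+\bar s})-u^{s}d(a_{\bar i}\otimes u^{-s}b_{-\bar i+\bar s})\big](a_{\bar j}\otimes b_{-\bar j+\bar t}) =(a_{\bar i}\otimes b_{-\bar i+\bar s})\big[u^{-m+t}d(a_{\bar j}\otimes u^{-t+m}b_{-\bar j+\bar t})-u^{t}d(a_{\bar j}\otimes u^{-t}b_{-\bar j+\bar t})\big].$$ In particular, $$(a_{\bar i}\otimes u^{-i})\big[u^{-m+j}d(a_{\bar j}\otimes u^{-j+m})-d(a_{\bar j}\otimes u^{-j})u^{j}\big]u^{-j}=\big[u^{-m+i}d(a_{\bar i}\otimes u^{-i+m})-d(a_{\bar i}\otimes u^{-i})u^{i}\big]u^{-i}(a_{\bar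 j}\otimes u^{-j}),$$ and $$(a_{\bar i}\otimes 1)\big[u^{-m+t}d(a_{\bar j}\otimes u^{-t+m}b_{-\bar j+\bar t})-d(a_{\bar j}\otimes u^{-t}b_{-\bar j+\bar t})u^{t}\big]=\big[u^{-m+i}d(a_{\bar i}\otimes u^{-i+m})-d(a_{\bar i}\otimes u^{-i})u^{i}\big](a_{\bar j}\otimes b_{-\bar j+\bar t}).$$
   Context: Algebras are $k$-vector spaces with bilinear product (not necessarily associative); perfect means $\mathcal A\mathcal A=\mathcal A$; $\mathcal D$ denotes derivations. Fix a primitive $m$-th root of unity $\omega$; $\mathcal A_{\bar i}=\{a\mid\sigma_1(a)=\omega^ia\}$, $S_{\bar i}=\{s\mid\sigma_2(s)=\omega^is\}$, and $(\mathcal A\otimes S)_{\bar 0}=\sum_{\bar j}\mathcal A_{-\bar j}\otimes S_{\bar j}$ is the fixed-point subalgebra of $\sigma_1\otimes\sigma_2$ (product $(a\otimes s)(a'\otimes s')=aa'\otimes ss'$). $\mathcal A\otimes S$ is an $S$-bimodule via $s'(a\otimes s)=(a\otimes s)s'=a\otimes ss'$, and products of elements of $S$ with elements of $\mathcal A\otimes S$ denote this action. *)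

(* Defs.v *)
From HB Require Import structures.
From mathcomp Require Import all_boot all_order all_algebra.
Set Implicit Arguments. Unset Strict Implicit. Unset Printing Implicit Defensive.
Import GRing.Theory.
Local Open Scope ring_scope.

Definition lin (k : fieldType) (U V : lmodType k) (f : U -> V) : Prop :=
  forall (c : k) (x y : U), f (c *: x + y) = c *: f x + f y.

Definition bilin (k : fieldType) (U V W : lmodType k) (f : U -> V -> W) : Prop :=
  (forall v, lin (fun u => f u v)) /\ (forall u, lin (f u)).

Definition is_tensor_product (k : fieldType) (A S T : lmodType k)
  (tens : A -> S -> T) : Prop :=
  bilin tens /\
  forall (W : lmodType k) (f : A -> S -> W), bilin f ->
    exists! g : T -> W, lin g /\ forall a s, g (tens a s) = f a s.

Definition perfect (k : fieldType) (A : lmodType k) (mulA : A -> A -> A) : Prop :=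
  forall a : A, exists r : seq (A * A), a = \sum_(p <- r) mulA p.1 p.2.

Definition is_alg_aut (k : fieldType) (A : lmodType k) (mulA : A -> A -> A)
  (sg : A -> A) : Prop :=
  lin sg /\ bijective sg /\ forall x y, sg (mulA x y) = mulA (sg x) (sg y).

Definition is_unital_alg_aut (k : fieldType) (S : comUnitAlgType k)
  (sg : S -> S) : Prop :=
  lin sg /\ bijective sg /\ (forall x y, sg (x * y) = sg x * sg y) /\ sg 1 = 1.

(* homogeneous component of degree \bar i : sg x = omega^i x *)
Definition homog (k : fieldType) (V : lmodType k) (sg : V -> V) (omega : k)
  (i : int) (x : V) : Prop := sg x = (omega ^ i) *: x.

(* membership in the fixed-point subalgebra (A (x) S)_0 = sum_j A_{-j} (x) S_j *)
Definition in_fixed (k : fieldType) (A : lmodType k) (S : comUnitAlgType k)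
  (T : lmodType k) (tens : A -> S -> T) (s1 : A -> A) (s2 : S -> S) (omega : k)
  (x : T) : Prop :=
  exists r : seq (int * A * S),
    (forall p, p \in r -> homog s1 omega (- p.1.1) p.1.2 /\ homog s2 omega p.1.1 p.2)
    /\ x = \sum_(p <- r) tens p.1.2 p.2.

(* d (a function T -> T) restricts to a derivation of the subalgebra B
   (only its values on B matter) *)
Definition is_der_on (k : fieldType) (T : lmodType k) (mulT : T -> T -> T)
  (B : T -> Prop) (d : T -> T) : Prop :=
  (forall x, B x -> B (d x)) /\
  (forall (c : k) x y, B x -> B y -> d (c *: x + y) = c *: d x + d y) /\
  (forall x y, B x -> B y -> d (mulT x y) = mulT (d x) y + mulT x (d y)).

(* Main.v *)
Require Import Defs.
From HB Require Import structures.
From mathcomp Require Import all_boot all_order all_algebra.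
From mathcomp Require Import zify.
Import GRing.Theory.
Local Open Scope ring_scope.

Lemma lin0 (k : fieldType) (U V : lmodType k) (f : U -> V) : lin f -> f 0 = 0.
Proof.
move=> H; have := H 1 0 0; rewrite !scale1r addr0 => h.
by apply: (@addrI _ (f 0)); rewrite addr0 -h.
Qed.

Lemma linD (k : fieldType) (U V : lmodType k) (f : U -> V) x y :
  lin f -> f (x + y) = f x + f y.
Proof. by move=> H; have := H 1 x y; rewrite !scale1r. Qed.

Lemma linB (k : fieldType) (U V : lmodType k) (f : U -> V) x y :
  lin f -> f (x - y) = f x - f y.
Proof.
move=> H; have := H (-1) y 0; rewrite addr0 lin0 // addr0 !scaleN1r => hN.
by rewrite linD // hN.
Qed.

Lemma linZ (k : fieldType) (U V : lmodType k) (f : U -> V) c x :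
  lin f -> f (c *: x) = c *: f x.
Proof. by move=> H; have := H c x 0; rewrite addr0 lin0 // addr0. Qed.

Lemma lin_comp (k : fieldType) (U V W : lmodType k) (f : V -> W) (g : U -> V) :
  lin f -> lin g -> lin (fun x => f (g x)).
Proof. by move=> Hf Hg c x y; rewrite Hg Hf. Qed.

Lemma lin_sum (k : fieldType) (U V : lmodType k) (f : U -> V) I (r : seq I) F :
  lin f -> f (\sum_(p <- r) F p) = \sum_(p <- r) f (F p).
Proof.
move=> H; elim: r => [|x r IH]; first by rewrite !big_nil lin0.
by rewrite !big_cons linD // IH.
Qed.

Theorem lemma4p7 (k : fieldType) (m : nat) (omega : k)
  (Hm : (0 < m)%N) (Homega : m.-primitive_root omega) (Hchar : (m%:R : k) != 0)
  (A : lmodType k) (mulA : A -> A -> A) (HmulA : bilin mulA) (Hperf : perfect mulA)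
  (S : comUnitAlgType k)
  (s1 : A -> A) (s2 : S -> S)
  (Hs1 : is_alg_aut mulA s1) (Hs2 : is_unital_alg_aut s2)
  (Hs1m : forall a, iter m s1 a = a) (Hs2m : forall b, iter m s2 b = b)
  (u : S) (Hu1 : homog s2 omega 1 u) (Hu : u \is a GRing.unit)
  (T : lmodType k) (tens : A -> S -> T) (Htens : is_tensor_product tens)
  (mulT : T -> T -> T) (HmulT : bilin mulT)
  (HmulT_tens : forall a a' s s', mulT (tens a s) (tens a' s') = tens (mulA a a') (s * s'))
  (actT : S -> T -> T) (HactT_lin : forall s, lin (actT s))
  (HactT_tens : forall s' a s, actT s' (tens a s) = tens a (s * s'))
  (d : T -> T) (Hd : is_der_on mulT (in_fixed tens s1 s2 omega) d) :
  (forall (i j s t : int) (ai aj : A) (bi bj : S),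
     homog s1 omega i ai -> homog s1 omega j aj ->
     homog s2 omega (- i + s) bi -> homog s2 omega (- j + t) bj ->
     mulT (actT (u ^ (- (m%:Z) + s)) (d (tens ai (u ^ (- s + m%:Z) * bi)))
           - actT (u ^ s) (d (tens ai (u ^ (- s) * bi))))
          (tens aj bj)
     = mulT (tens ai bi)
          (actT (u ^ (- (m%:Z) + t)) (d (tens aj (u ^ (- t + m%:Z) * bj)))
           - actT (u ^ t) (d (tens aj (u ^ (- t) * bj)))))
  /\
  (forall (i j : int) (ai aj : A),
     homog s1 omega i ai -> homog s1 omega j aj ->
     mulT (tens ai (u ^ (- i)))
          (actT (u ^ (- j))
             (actT (u ^ (- (m%:Z) + j)) (d (tens aj (u ^ (- j + m%:Z))))
              - actT (u ^ j) (d (tens aj (u ^ (- j))))))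
     = mulT (actT (u ^ (- i))
             (actT (u ^ (- (m%:Z) + i)) (d (tens ai (u ^ (- i + m%:Z))))
              - actT (u ^ i) (d (tens ai (u ^ (- i))))))
          (tens aj (u ^ (- j))))
  /\
  (forall (i j t : int) (ai aj : A) (bj : S),
     homog s1 omega i ai -> homog s1 omega j aj ->
     homog s2 omega (- j + t) bj ->
     mulT (tens ai 1)
          (actT (u ^ (- (m%:Z) + t)) (d (tens aj (u ^ (- t + m%:Z) * bj)))
           - actT (u ^ t) (d (tens aj (u ^ (- t) * bj))))
     = mulT (actT (u ^ (- (m%:Z) + i)) (d (tens ai (u ^ (- i + m%:Z))))
             - actT (u ^ i) (d (tens ai (u ^ (- i)))))
          (tens aj bj)).
Proof.
case: Hs2 => s2lin [_ [s2mul s2one]].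
case: Hd => HdB [_ Hleib].
case: HmulT => HmulL HmulR.
have om1 := prim_expr_order Homega.
have om1z : omega ^ (m%:Z) = 1 := om1.
have w0 : omega != 0.
  apply/eqP => e; move: om1; rewrite e expr0n eqn0Ngt Hm /= => /eqP.
  by rewrite eq_sym oner_eq0.
have s2V : forall (w : S) (c : k), w \is a GRing.unit -> c != 0 ->
    s2 w = c *: w -> s2 w^-1 = c^-1 *: w^-1.
  move=> w c uw c0 e.
  have h1 : s2 w^-1 * s2 w = 1 by rewrite -s2mul mulVr // s2one.
  have h2 : s2 w * (c^-1 *: w^-1) = 1.
    by rewrite e -scalerAl -scalerAr scalerA mulfV // divrr // scale1r.
  by rewrite -[s2 w^-1]mulr1 -h2 mulrA h1 mul1r.
have hn : forall n, s2 (u ^+ n) = omega ^+ n *: u ^+ n.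
  elim=> [|n IH]; first by rewrite !expr0 s2one scale1r.
  rewrite exprS s2mul IH Hu1 expr1z -scalerAl -scalerAr scalerA -exprS.
  by rewrite -exprS.
have hz : forall z : int, s2 (u ^ z) = omega ^ z *: u ^ z.
  case=> n; first exact: hn.
  rewrite NegzE -!exprnN; apply: s2V; first by rewrite unitrX.
    by rewrite expf_neq0.
  exact: hn.
have hmul : forall z1 z2 x y, homog s2 omega z1 x -> homog s2 omega z2 y ->
    homog s2 omega (z1 + z2) (x * y).
  move=> z1 z2 x y h1 h2; rewrite /homog s2mul h1 h2 expfzDr //.
  by rewrite -scalerAl -scalerAr scalerA.
have hm : forall z x, homog s2 omega (z + m%:Z) x -> homog s2 omega z x.
  by move=> z x; rewrite /homog expfzDr // om1z mulr1.
have hcongr : forall z1 z2 x, z1 = z2 -> homog s2 omega z1 x -> homog s2 omega z2 x.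
  by move=> z1 z2 x ->.
have inB : forall z a b, homog s1 omega z a -> homog s2 omega (- z) b ->
    in_fixed tens s1 s2 omega (tens a b).
  move=> z a b ha hb; exists [:: (- z, a, b)]; split; last by rewrite big_seq1.
  by move=> p; rewrite inE => /eqP -> /=; rewrite opprK.
(* span predicate *)
pose P x := forall f g : T -> T, lin f -> lin g ->
   (forall a b, f (tens a b) = g (tens a b)) -> f x = g x.
have Ptens : forall a b, P (tens a b) by move=> a b f g _ _ ->.
have PB : forall x, in_fixed tens s1 s2 omega x -> P x.
  move=> x [r [_ ->]] f g Hf Hg Hfg; rewrite !lin_sum //.
  by apply: eq_bigr => p _; apply: Hfg.
have PBB : forall x y, P x -> P y -> P (x - y).
  move=> x y Hx Hy f g Hf Hg Hfg; rewrite !linB //.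
  by rewrite (Hx f g) // (Hy f g).
have Pact : forall s x, P x -> P (actT s x).
  move=> s x Hx f g Hf Hg Hfg.
  apply: (Hx (fun x => f (actT s x)) (fun x => g (actT s x))).
  - exact: lin_comp.
  - exact: lin_comp.
  by move=> a b; rewrite HactT_tens Hfg.
have PM : forall x y, P x -> P y -> P (mulT x y).
  move=> x y Hx Hy f g Hf Hg Hfg.
  apply: (Hx (fun x => f (mulT x y)) (fun x => g (mulT x y))).
  - exact: lin_comp Hf (HmulL y).
  - exact: lin_comp Hg (HmulL y).
  move=> a b.
  apply: (Hy (fun y => f (mulT (tens a b) y)) (fun y => g (mulT (tens a b) y))).
  - exact: lin_comp Hf (HmulR _).
  - exact: lin_comp Hg (HmulR _).
  by move=> a' b'; rewrite HmulT_tens Hfg.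
have actA : forall s s' x, P x -> actT s (actT s' x) = actT (s' * s) x.
  move=> s s' x Hx; apply: (Hx (fun x => actT s (actT s' x)) (actT (s' * s))).
  - exact: lin_comp.
  - exact: HactT_lin.
  by move=> a b; rewrite !HactT_tens mulrA.
have mulactl : forall s x y, P x -> P y -> mulT (actT s x) y = actT s (mulT x y).
  move=> s x y Hx Hy.
  apply: (Hx (fun x => mulT (actT s x) y) (fun x => actT s (mulT x y))).
  - exact: lin_comp (HmulL y) (HactT_lin s).
  - exact: lin_comp (HactT_lin s) (HmulL y).
  move=> a b.
  apply: (Hy (fun y => mulT (actT s (tens a b)) y) (fun y => actT s (mulT (tens a b) y))).
  - exact: HmulR.
  - exact: lin_comp (HactT_lin s) (HmulR _).
  by move=> a' b'; rewrite !HactT_tens !HmulT_tens HactT_tens mulrAC.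
have mulactr : forall s x y, P x -> P y -> mulT x (actT s y) = actT s (mulT x y).
  move=> s x y Hx Hy.
  apply: (Hx (fun x => mulT x (actT s y)) (fun x => actT s (mulT x y))).
  - exact: HmulL.
  - exact: lin_comp (HactT_lin s) (HmulL y).
  move=> a b.
  apply: (Hy (fun y => mulT (tens a b) (actT s y)) (fun y => actT s (mulT (tens a b) y))).
  - exact: lin_comp (HmulR _) (HactT_lin s).
  - exact: lin_comp (HactT_lin s) (HmulR _).
  by move=> a' b'; rewrite !HactT_tens !HmulT_tens mulrA.
have BX : forall (i s : int) a b, homog s1 omega i a -> homog s2 omega (- i + s) b ->
    in_fixed tens s1 s2 omega (tens a (u ^ (- s) * b)).
  move=> i s a b ha hb; apply: inB ha _.
  apply: hcongr (hmul _ _ _ _ (hz (- s)) hb); lia.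
have BX' : forall (i s : int) a b, homog s1 omega i a -> homog s2 omega (- i + s) b ->
    in_fixed tens s1 s2 omega (tens a (u ^ (- s + m%:Z) * b)).
  move=> i s a b ha hb; apply: inB ha _; apply: hm.
  apply: hcongr (hmul _ _ _ _ (hz (- s + m%:Z)) hb); lia.
have PD : forall (i s : int) a b, homog s1 omega i a -> homog s2 omega (- i + s) b ->
    P (actT (u ^ (- (m%:Z) + s)) (d (tens a (u ^ (- s + m%:Z) * b)))
           - actT (u ^ s) (d (tens a (u ^ (- s) * b)))).
  move=> i s a b ha hb; apply: PBB; apply: Pact; apply: PB; apply: HdB.
    exact: BX' ha hb.
  exact: BX ha hb.
have H1 : forall (i j s t : int) (ai aj : A) (bi bj : S),
     homog s1 omega i ai -> homog s1 omega j aj ->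
     homog s2 omega (- i + s) bi -> homog s2 omega (- j + t) bj ->
     mulT (actT (u ^ (- (m%:Z) + s)) (d (tens ai (u ^ (- s + m%:Z) * bi)))
           - actT (u ^ s) (d (tens ai (u ^ (- s) * bi))))
          (tens aj bj)
     = mulT (tens ai bi)
          (actT (u ^ (- (m%:Z) + t)) (d (tens aj (u ^ (- t + m%:Z) * bj)))
           - actT (u ^ t) (d (tens aj (u ^ (- t) * bj)))).
  move=> i j s t ai aj bi bj hai haj hbi hbj.
  set X := tens ai (u ^ (- s) * bi); set X' := tens ai (u ^ (- s + m%:Z) * bi).
  set Y := tens aj (u ^ (- t) * bj); set Y' := tens aj (u ^ (- t + m%:Z) * bj).
  have BXx := BX _ _ _ _ hai hbi; have BXx' := BX' _ _ _ _ hai hbi.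
  have BYy := BX _ _ _ _ haj hbj; have BYy' := BX' _ _ _ _ haj hbj.
  have PX := PB _ BXx; have PX' := PB _ BXx'; have PY := PB _ BYy; have PY' := PB _ BYy'.
  have PdX := PB _ (HdB _ BXx); have PdX' := PB _ (HdB _ BXx').
  have PdY := PB _ (HdB _ BYy); have PdY' := PB _ (HdB _ BYy').
  have eXY : mulT X' Y = mulT X Y'.
    rewrite /X /X' /Y /Y' !HmulT_tens; congr tens.
    rewrite !exprzDr //; rewrite -!mulrA; congr (_ * _).
    by rewrite mulrCA; congr (_ * _); rewrite mulrCA.
  have key := Hleib _ _ BXx' BYy; rewrite eXY (Hleib _ _ BXx BYy') in key.
  have eX' : X' = actT (u ^ (m%:Z)) X.
    by rewrite /X /X' HactT_tens mulrAC -exprzDr.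
  have eY' : Y' = actT (u ^ (m%:Z)) Y.
    by rewrite /Y /Y' HactT_tens mulrAC -exprzDr.
  have eXi : tens ai bi = actT (u ^ s) X.
    by rewrite /X HactT_tens mulrAC -exprzDr // addNr expr0z mul1r.
  have eYj : tens aj bj = actT (u ^ t) Y.
    by rewrite /Y HactT_tens mulrAC -exprzDr // addNr expr0z mul1r.
  rewrite -/X -/X' -/Y -/Y' in key.
  rewrite [in mulT X' _]eX' [in mulT (d X) _]eY' mulactl // mulactr // in key.
  have key' : mulT (d X') Y = actT (u ^ (m%:Z)) (mulT (d X) Y) + mulT X (d Y')
                 - actT (u ^ (m%:Z)) (mulT X (d Y)).
    by rewrite key addrK.
  rewrite eXi eYj.
  have mBl : forall x x' y, mulT (x - x') y = mulT x y - mulT x' y.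
    by move=> x x' y; apply: (@linB _ _ _ (fun z => mulT z y)).
  have mBr : forall x x' y, mulT y (x - x') = mulT y x - mulT y x'.
    by move=> x x' y; apply: linB.
  rewrite mBl mBr.
  rewrite (mulactr _ _ _ (Pact _ _ PdX') PY) (mulactr _ _ _ (Pact _ _ PdX) PY).
  rewrite (mulactl _ _ _ PdX' PY) (mulactl _ _ _ PdX PY).
  rewrite (mulactl _ _ _ PX (Pact _ _ PdY')) (mulactl _ _ _ PX (Pact _ _ PdY)).
  rewrite (mulactr _ _ _ PX PdY') (mulactr _ _ _ PX PdY).
  rewrite !actA; try by apply: PM.
  have e1 : u ^ (- (m%:Z) + s) * u ^ t = u ^ (- (m%:Z) + t) * u ^ s.
    by rewrite -!exprzDr //; congr (_ ^ _); lia.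
  have e2 : u ^ s * u ^ t = u ^ (m%:Z) * (u ^ (- (m%:Z) + t) * u ^ s).
    by rewrite -!exprzDr //; congr (_ ^ _); lia.
  have e3 : u ^ t * u ^ s = u ^ (m%:Z) * (u ^ (- (m%:Z) + t) * u ^ s).
    by rewrite -!exprzDr //; congr (_ ^ _); lia.
  rewrite key' e1 e2 e3 -!(actA _ (u ^ (m%:Z))); try by apply: PM.
  have aB : forall s x y, actT s (x - y) = actT s x - actT s y.
    by move=> s' x y; apply: linB.
  have aD : forall s x y, actT s (x + y) = actT s x + actT s y.
    by move=> s' x y; apply: linD.
  rewrite !aB aD.
  by rewrite -/X -/Y -/Y' addrC !addrA addNr add0r.
have h1 : forall z, homog s2 omega (- z + z) 1.
  by move=> z; rewrite /homog addNr expr0z scale1r s2one.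
split; first exact: H1.
split.
  move=> i j ai aj hai haj.
  have := H1 i j i j ai aj 1 1 hai haj (h1 i) (h1 j); rewrite !mulr1 => E.
  have PDi := PD i i ai 1 hai (h1 i); have PDj := PD j j aj 1 haj (h1 j).
  rewrite !mulr1 in PDi PDj.
  have ti : tens ai (u ^ (- i)) = actT (u ^ (- i)) (tens ai 1).
    by rewrite HactT_tens mul1r.
  have tj : tens aj (u ^ (- j)) = actT (u ^ (- j)) (tens aj 1).
    by rewrite HactT_tens mul1r.
  rewrite [in LHS]ti [in RHS]tj.
  rewrite (mulactl _ _ _ (Ptens _ _) (Pact _ _ PDj)) (mulactr _ _ _ (Ptens _ _) PDj).
  rewrite (mulactl _ _ _ PDi (Pact _ _ (Ptens _ _))) (mulactr _ _ _ PDi (Ptens _ _)).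
  by rewrite E.
move=> i j t ai aj bj hai haj hbj.
by have := H1 i j i t ai aj 1 bj hai haj (h1 i) hbj; rewrite !mulr1 => <-.
Qed.
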